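(* Let $\mathbf{A}\in\mathsf{K}$. Then the following hold. (i) The $\{\wedge,\vee,\neg,0,1\}$-reduct of $\mathbf{A}$ is an involutive bisemilattice. (ii) All homomorphisms $p_{ij}$ in the Płonka sum representation of this reduct are surjective. (iii) Suppose the lowest fibre $\mathbf{A}_0$ is a two-element Boolean algebra. Then there is a unique unary operation $J_2$ on the reduct turning it into a member of $\mathsf{K}$, namely: $J_2a=1$ if $a=1_i$ (the top of fibre $\mathbf{A}_i$) for some $i\in I^+$, and $J_2a=0$ otherwise. Here $I^+=\{i\in I:|A_i|>1\}$.
   Context: $\mathsf{K}$ is the variety of type $\langle\wedge,\vee,\neg,J_2,0,1\rangle$ axiomatised by: - $x\vee x\approx x$; - $x\vee y\approx y\vee x$; - $x\vee(y\vee z)\approx(x\vee y)\vee z$; - $\neg\neg x\approx x$; - $x\wedge y\approx\neg(\neg x\vee\neg y)$; - $x\wedge(\neg x\vee y)\approx x\wedge y$; - $0\vee x\approx x$; - $1\approx\neg0$; - $J_2x\vee\neg J_2x\approx1$; - $x\vee J_2y\approx x\vee J_2(x\vee y)$; - $x\wedge J_2x\approx x$; - $J_2(x\wedge\neg x)\approx0$. An involutive bisemilattice is an algebra $\langle A,\wedge,\vee,\neg,0,1\rangle$ satisfying the first eight identities. Equivalently, it is an algebra isomorphic to a Płonka sum of Boolean algebras. Such a sum is built from: - a join-semilattice $\langle I,\vee,0\rangle$ with least element $0$; - pairwise disjoint Boolean algebras $\mathbf{A}_i$ (fibres); - homomorphisms $p_{ij}:\mathbf{A}_i\to\mathbf{A}_j$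 for $i\le j$, with $p_{ii}=\mathrm{id}$ and $p_{jk}p_{ij}=p_{ik}$. Its universe is $\bigsqcup A_i$. Operations are computed by pushing the arguments via the $p$'s to the fibre indexed by the join of their indices; constants come from $\mathbf{A}_0$. This representation is canonical: $a,b$ lie in the same fibre iff $a\wedge(a\vee b)=a$ and $b\wedge(b\vee a)=b$. Also $p_{ij}(a)=a\wedge(a\vee b)$ for any $b\in A_j$. A fibre is trivial if it is a singleton. *)

(* Defs.v *)
Section Algebra.
Variables (A : Type) (meet join : A -> A -> A) (neg : A -> A) (zero one : A).

Record is_IBS : Prop := {
  ibs_idem  : forall x, join x x = x;
  ibs_comm  : forall x y, join x y = join y x;
  ibs_assoc : forall x y z, join x (join y z) = join (join x y) z;
  ibs_negneg : forall x, neg (neg x) = x;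
  ibs_meet  : forall x y, meet x y = neg (join (neg x) (neg y));
  ibs_absorb : forall x y, meet x (join (neg x) y) = meet x y;
  ibs_zero  : forall x, join zero x = x;
  ibs_one   : one = neg zero
}.

Record is_K (J2 : A -> A) : Prop := {
  K_ibs : is_IBS;
  K_J1 : forall x, join (J2 x) (neg (J2 x)) = one;
  K_J2 : forall x y, join x (J2 y) = join x (J2 (join x y));
  K_J3 : forall x, meet x (J2 x) = x;
  K_J4 : forall x, J2 (meet x (neg x)) = zero
}.

(* Canonical Płonka decomposition of an involutive bisemilattice:
   a and b lie in the same fibre. *)
Definition same_fibre (a b : A) : Prop :=
  meet a (join a b) = a /\ meet b (join b a) = b.

(* index of the fibre of a  <=  index of the fibre of c
   (i <= j iff i v j = j, and the fibre of a v c is indexed by i v j). *)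
Definition fibre_le (a c : A) : Prop := same_fibre (join a c) c.

(* p_ij (x) = x /\ (x \/ b) for any b in A_j. *)
Definition p_map (x b : A) : A := meet x (join x b).

(* a is the top element 1_i of its fibre A_i (w.r.t. the Boolean order of the
   fibre, whose meet is the restriction of meet). *)
Definition is_fibre_top (a : A) : Prop :=
  forall b, same_fibre b a -> meet b a = b.

Definition nontrivial_fibre (a : A) : Prop :=
  exists b, same_fibre b a /\ b <> a.

Definition J2_canonical (J2 : A -> A) : Prop :=
  forall a,
    ((is_fibre_top a /\ nontrivial_fibre a) -> J2 a = one) /\
    (~ (is_fibre_top a /\ nontrivial_fibre a) -> J2 a = zero).

Definition lowest_fibre_two : Prop :=
  exists x y : A, x <> y /\ forall z, same_fibre z zero <-> (z = x \/ z = y).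

End Algebra.

Arguments is_IBS {A}.
Arguments is_K {A}.
Arguments same_fibre {A}.
Arguments fibre_le {A}.
Arguments p_map {A}.
Arguments is_fibre_top {A}.
Arguments nontrivial_fibre {A}.
Arguments J2_canonical {A}.
Arguments lowest_fibre_two {A}.

(* Main.v *)
Require Import Defs.
From Stdlib Require Import Setoid.

Section IBSLemmas.
Variables (A : Type) (meet join : A -> A -> A) (neg : A -> A) (zero one : A).
Hypothesis H : is_IBS meet join neg zero one.

Lemma jI x : join x x = x. Proof. apply (ibs_idem _ _ _ _ _ _ H). Qed.
Lemma jC x y : join x y = join y x. Proof. apply (ibs_comm _ _ _ _ _ _ H). Qed.
Lemma jA x y z : join x (join y z) = join (join x y) z. Proof. apply (ibs_assoc _ _ _ _ _ _ H). Qed.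
Lemma nn x : neg (neg x) = x. Proof. apply (ibs_negneg _ _ _ _ _ _ H). Qed.
Lemma mdef x y : meet x y = neg (join (neg x) (neg y)). Proof. apply (ibs_meet _ _ _ _ _ _ H). Qed.
Lemma ab6 x y : meet x (join (neg x) y) = meet x y. Proof. apply (ibs_absorb _ _ _ _ _ _ H). Qed.
Lemma j0 x : join zero x = x. Proof. apply (ibs_zero _ _ _ _ _ _ H). Qed.
Lemma j0r x : join x zero = x. Proof. rewrite jC; apply j0. Qed.
Lemma onedef : one = neg zero. Proof. apply (ibs_one _ _ _ _ _ _ H). Qed.
Lemma negone : neg one = zero. Proof. rewrite onedef, nn; reflexivity. Qed.

Lemma nJ x y : neg (join x y) = meet (neg x) (neg y).
Proof. rewrite mdef, !nn; reflexivity. Qed.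
Lemma nM x y : neg (meet x y) = join (neg x) (neg y).
Proof. rewrite mdef, nn; reflexivity. Qed.
Lemma neg_inj x y : neg x = neg y -> x = y.
Proof. intro E. rewrite <- (nn x), <- (nn y), E; reflexivity. Qed.

Lemma mC x y : meet x y = meet y x.
Proof. rewrite !mdef, jC; reflexivity. Qed.
Lemma mA x y z : meet x (meet y z) = meet (meet x y) z.
Proof. rewrite !mdef, !nn, jA; reflexivity. Qed.
Lemma mI x : meet x x = x.
Proof. rewrite mdef, jI, nn; reflexivity. Qed.
Lemma m1 x : meet one x = x.
Proof. rewrite mdef, onedef, nn, j0, nn; reflexivity. Qed.
Lemma m1r x : meet x one = x.
Proof. rewrite mC; apply m1. Qed.
Lemma mCA x y z : meet x (meet y z) = meet y (meet x z).
Proof. rewrite !mA, (mC x y); reflexivity. Qed.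
Lemma jCA x y z : join x (join y z) = join y (join x z).
Proof. rewrite !jA, (jC x y); reflexivity. Qed.

Lemma ab6d x y : join x (meet (neg x) y) = join x y.
Proof.
  apply neg_inj. rewrite !nJ, nM, ab6. reflexivity.
Qed.
Lemma N1 x : meet x (neg x) = meet x zero.
Proof. rewrite <- (ab6 x zero), j0r. reflexivity. Qed.
Lemma N1d x : join x (neg x) = join x one.
Proof. rewrite <- (ab6d x one), m1r. reflexivity. Qed.
Lemma E1d x : join x (meet x zero) = x.
Proof. rewrite <- N1, mC, ab6d. apply jI. Qed.
Lemma oo x : meet (meet x zero) zero = meet x zero.
Proof. rewrite <- mA, mI; reflexivity. Qed.
Lemma oneg x : meet (neg x) zero = meet x zero.
Proof. rewrite <- N1, nn, mC, N1; reflexivity. Qed.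
Lemma K1 x y : meet (neg x) (join x y) = meet (neg x) y.
Proof. rewrite <- (ab6 (neg x) y), nn; reflexivity. Qed.

Lemma oJ x y : meet (join x y) zero = meet (meet x y) zero.
Proof.
  rewrite <- N1, nJ, mA, (mC (join x y)), K1.
  rewrite <- mA, N1, mCA, oneg, mCA, mA; reflexivity.
Qed.

Lemma T x y : meet x (meet (join x y) zero) = meet (join x y) zero.
Proof. rewrite oJ, !mA, mI; reflexivity. Qed.

Lemma Ly0 x y : join x (meet y zero) = join x (meet (join x y) zero).
Proof.
  rewrite <- (ab6d x (meet y zero)), oJ. f_equal.
  rewrite mCA, oneg, mCA, mA; reflexivity.
Qed.

Lemma CAN x y : meet x (join x y) = join x (meet y zero).
Proof.
  rewrite Ly0.
  set (s := join x y).
  set (z := meet s zero).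
  assert (Hz : neg z = join (neg x) s).
  { unfold z. rewrite nM, <- onedef.
    rewrite <- (N1d (neg s)), nn, (jC (neg s) s), (N1d s).
    unfold s. rewrite (jCA (neg x) x y), (jA x (neg x) y), (N1d x), <- !jA, (jC one y); reflexivity. }
  rewrite <- (ab6 x s), <- Hz.
  rewrite jC, <- (ab6d z x).
  set (w := meet (neg z) x).
  assert (Hw : meet w zero = z).
  { unfold w. rewrite <- mA, mCA, oneg. unfold z. rewrite oo.
    unfold s. rewrite T. reflexivity. }
  assert (E : join z w = w) by (rewrite <- Hw at 1; rewrite jC; apply E1d).
  rewrite E; unfold w; apply mC.
Qed.


Section KLemmas.
Variable J : A -> A.
Hypothesis HK : is_K meet join neg zero one J.

Lemma J0 : J zero = zero.
Proof.
  transitivity (J (meet zero (neg zero))).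
  - rewrite <- onedef, m1r. reflexivity.
  - apply (K_J4 _ _ _ _ _ _ _ HK).
Qed.

Lemma D1 x : join x (J x) = x.
Proof.
  transitivity (join x (J (join x zero))).
  - rewrite j0r. reflexivity.
  - rewrite <- (K_J2 _ _ _ _ _ _ _ HK), J0, j0r. reflexivity.
Qed.

Lemma F3 x : meet x (J x) = x.
Proof. apply (K_J3 _ _ _ _ _ _ _ HK). Qed.

Lemma oJz x : meet (J x) zero = zero.
Proof.
  rewrite <- (N1). apply (neg_inj).
  rewrite (nM), (nn), (jC),
    (K_J1 _ _ _ _ _ _ _ HK), (onedef). reflexivity.
Qed.

Lemma part2 a c : fibre_le meet join a c ->
  exists a' : A, same_fibre meet join a' a /\ p_map meet join a' c = c.
Proof.
  intros [_ Hc].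
  rewrite (jCA c a c), (jI c), (jC a c), (CAN) in Hc.
  exists (join (meet a zero) (J c)).
  unfold same_fibre, p_map. split; [split|].
  - rewrite (CAN), <- (jA), (jC  (J c)),
      (jA), (jI). reflexivity.
  - rewrite CAN, oJ, <- (mA (meet a zero) (J c) zero), oJz, oo, E1d. reflexivity.
  - rewrite CAN, <- jA, <- (CAN (J c) c),
      (jC (J c) c), D1, (mC (J c) c), F3, (jC (meet a zero) c), Hc.
    reflexivity.
Qed.


Lemma S_fib a b : same_fibre meet join a b -> meet a zero = meet b zero.
Proof.
  intros [Ha Hb].
  rewrite <- Ha at 1. rewrite <- Hb at 2.
  rewrite <- !mA, !T, jC. reflexivity.
Qed.

Lemma negoa a : neg (meet a zero) = join a (neg a).
Proof.
  rewrite nM, <- onedef, <- (N1d (neg a)), nn, jC. reflexivity.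
Qed.

Lemma zero_ne_one (L2 : lowest_fibre_two meet join zero) : zero <> one.
Proof.
  destruct L2 as [u [v [Huv Hf]]]. intro E. apply Huv.
  assert (Hu : u = zero).
  { assert (same_fibre meet join u zero) as [_ Hu2] by (apply Hf; left; reflexivity).
    rewrite j0 in Hu2. rewrite <- (m1 u), <- E, Hu2. reflexivity. }
  assert (Hv : v = zero).
  { assert (same_fibre meet join v zero) as [_ Hv2] by (apply Hf; right; reflexivity).
    rewrite j0 in Hv2. rewrite <- (m1 v), <- E, Hv2. reflexivity. }
  congruence.
Qed.

Lemma Jcases (L2 : lowest_fibre_two meet join zero) x : J x = zero \/ J x = one.
Proof.
  pose proof (zero_ne_one L2) as Hzo.
  destruct L2 as [u [v [Huv Hf]]].
  assert (Hz : zero = u \/ zero = v).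
  { apply Hf. split; rewrite j0; apply mI. }
  assert (Ho : one = u \/ one = v).
  { apply Hf. split.
    - rewrite j0r; apply mI.
    - rewrite j0, m1r; reflexivity. }
  assert (HJ : J x = u \/ J x = v).
  { apply Hf. split.
    - rewrite j0r; apply mI.
    - rewrite j0, mC; apply oJz. }
  destruct Hz as [Hz|Hz], Ho as [Ho|Ho], HJ as [HJ|HJ];
    first [left; congruence | right; congruence | exfalso; congruence].
Qed.

Lemma J_zero_case x : J x = zero -> x = meet x zero.
Proof. intro E. rewrite <- E. symmetry. apply F3. Qed.

Lemma J_one_case x : J x = one -> x = join x (neg x).
Proof. intro E. rewrite N1d, <- E. symmetry. apply D1. Qed.



Lemma canon (L2 : lowest_fibre_two meet join zero) : J2_canonical meet join zero one J.
Proof.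
  pose proof (zero_ne_one L2) as Hzo.
  intro a. destruct (Jcases L2 a) as [Ha|Ha].
  - pose proof (J_zero_case a Ha) as Ea. split; [|intros _; exact Ha].
    intros [Htop [b [Hb Hba]]]. exfalso. apply Hba.
    pose proof (S_fib b a Hb) as Sb.
    destruct (Jcases L2 b) as [Jb|Jb].
    + rewrite (J_zero_case b Jb), Sb, <- Ea. reflexivity.
    + pose proof (J_one_case b Jb) as Eb.
      rewrite <- negoa, Sb in Eb.
      rewrite <- (Htop b Hb), Eb, Ea at 1. rewrite oo.
      rewrite Ea at 2. rewrite (mC (neg _)), N1, oo, <- Ea. reflexivity.
  - pose proof (J_one_case a Ha) as Ea. split; [intros _; exact Ha|].
    intro Hn. exfalso. apply Hn. split.
    + intros b Hb. pose proof (S_fib b a Hb) as Sb.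
      destruct (Jcases L2 b) as [Jb|Jb].
      * rewrite (J_zero_case b Jb), Sb, mC, mA, mI. reflexivity.
      * rewrite (J_one_case b Jb), <- negoa, Sb, negoa, <- Ea. apply mI.
    + exists (meet a zero). split.
      * split.
        -- rewrite jC, E1d, mC, mA, mI. reflexivity.
        -- rewrite E1d. apply mI.
      * intro E. apply Hzo. rewrite <- Ha, <- E, <- N1.
        symmetry; apply (K_J4 _ _ _ _ _ _ _ HK).
Qed.

End KLemmas.
End IBSLemmas.

Theorem lemma4p3 (A : Type) (meet join : A -> A -> A) (neg J2 : A -> A)
    (zero one : A) (HK : is_K meet join neg zero one J2) :
  (* (i) *)
  is_IBS meet join neg zero one /\
  (* (ii) every p_ij (i <= j) is surjective *)
  (forall a c : A, fibre_le meet join a c ->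
     exists a' : A, same_fibre meet join a' a /\ p_map meet join a' c = c) /\
  (* (iii) *)
  (lowest_fibre_two meet join zero ->
     (exists J : A -> A, is_K meet join neg zero one J /\
                         J2_canonical meet join zero one J) /\
     (forall J : A -> A, is_K meet join neg zero one J ->
                         J2_canonical meet join zero one J)).
Proof.
  pose proof (K_ibs _ _ _ _ _ _ _ HK) as H.
  split; [exact H|].
  split; [exact (part2 _ _ _ _ _ _ H _ HK)|].
  intro L2. split.
  - exists J2. split; [exact HK|]. exact (canon _ _ _ _ _ _ H _ HK L2).
  - intros J HJ. exact (canon _ _ _ _ _ _ H _ HJ L2).
Qed.
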